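(* In a non-degenerate RiFle assignment game, the set of unmatched agents is the same in all stable outcomes.
   Context: A RiFle assignment game consists of two disjoint sets of agents $P=\{p_1,\dots,p_n\}$ and $Q=\{q_1,\dots,q_n\}$, a pair of nonnegative real numbers $(\beta_{ij},\gamma_{ij})$ for every pair $(p_i,q_j)\in P\times Q$ (write $\alpha_{ij}=\beta_{ij}+\gamma_{ij}$), and a designation of every agent as rigid or flexible. Let $\mathcal R$ be the set of pairs with at least one rigid agent and $\mathcal F$ the set of pairs with both agents flexible. An outcome $(\bar u,\bar v;\mu)$ consists of a matching $\mu$ between $P$ and $Q$ (write $p_i\stackrel{\mu}{\longleftrightarrow} q_j$) and payoff vectors $\bar u,\bar v\in\mathbb R^n$. It is feasible if: (1) $u_i\ge0$, $v_j\ge0$; (2) if a rigid $p_i$ is matched to $q_j$ then $u_i=\beta_{ij}$ and, if $q_j$ is flexible, $v_j\ge\gamma_{ij}$; symmetrically for a rigid $q_j$ matched to $p_i$: $v_j=\gamma_{ij}$ and, if $p_i$ is flexible, $u_i\ge\beta_{ij}$; (3) $\sum_iu_i+\sum_jv_j=\sum_{p_i\stackrel{\mu}{\longleftrightarrow}q_j}\alpha_{ij}$. It is stable if feasible and $u_i+v_j\ge\alpha_{ij}$ for $(p_i,q_j)\in\mathcal F$ and ($u_i\ge\beta_{ij}$ or $v_j\ge\gamma_{ij}$) for $(p_i,q_j)\in\mathcal R$. Reservation prices are modeled by rigid dummy agents: an agent is unmatched in an outcome if he is not matched to a real agent; for the following definition such an agent is regarded as matched to a rigid dummy agent (whose prescribed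 share for him is his reservation price). Given a coalition $C\subseteq P\cup Q$ and a matching $\mu$, the total payoff to $C$ under $\mu$ is forced if every pair matched under $\mu$ with one agent in $C$ and the other outside $C$ contains a rigid agent; the forced payoff is then $\sum_{p_i\in C,\ p_i\stackrel{\mu}{\longleftrightarrow}q_j}\beta_{ij}+\sum_{q_j\in C,\ p_i\stackrel{\mu}{\longleftrightarrow}q_j}\gamma_{ij}$. The game is non-degenerate if for any two matchings $\mu,\mu'$: whenever $C$ is a minimal coalition such that the payoff to $C$ is forced under both $\mu$ and $\mu'$, and the two forced payoffs are equal, then $\mu$ and $\mu'$ coincide on $C$. *)

(* Defs.v *)
From mathcomp Require Import all_boot all_order all_algebra.
Set Implicit Arguments. Unset Strict Implicit. Unset Printing Implicit Defensive.
Import Order.TTheory GRing.Theory Num.Theory.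
Local Open Scope ring_scope.

(* Real agents: P = {p_i | i : 'I_n}, Q = {q_j | j : 'I_n}.
   An agent of P u Q is encoded as an element of 'I_n + 'I_n
   (inl i = p_i, inr j = q_j). *)
Record rifle_game (R : realFieldType) (n : nat) := RifleGame {
  beta  : 'I_n -> 'I_n -> R;   (* share of p_i in pair (p_i,q_j) *)
  gamma : 'I_n -> 'I_n -> R;   (* share of q_j in pair (p_i,q_j) *)
  resP  : 'I_n -> R;           (* reservation price of p_i (share prescribed by its rigid dummy) *)
  resQ  : 'I_n -> R;
  rigidP : 'I_n -> bool;
  rigidQ : 'I_n -> bool
}.

Section RiFle.
Variables (R : realFieldType) (n : nat) (G : rifle_game R n).

Definition alpha (i j : 'I_n) : R := beta G i j + gamma G i j.

Definition flex_pair (i j : 'I_n) : bool := ~~ rigidP G i && ~~ rigidQ G j.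

(* A (partial) matching of real agents: mu i = Some j means p_i <-> q_j,
   mu i = None means p_i is unmatched (i.e. matched to its rigid dummy). *)
Definition is_matching (mu : 'I_n -> option 'I_n) : Prop :=
  forall i i' j, mu i = Some j -> mu i' = Some j -> i = i'.

Definition mateQ (mu : 'I_n -> option 'I_n) (j : 'I_n) : option 'I_n :=
  [pick i | mu i == Some j].

Definition unmatched (mu : 'I_n -> option 'I_n) : {set 'I_n + 'I_n} :=
  [set a | match a with
           | inl i => mu i == None
           | inr j => mateQ mu j == None
           end].

Definition feasible (u v : 'I_n -> R) (mu : 'I_n -> option 'I_n) : Prop :=
  [/\ is_matching mu,
      (forall i, 0 <= u i) /\ (forall j, 0 <= v j),
      (forall i j, mu i = Some j ->
         (rigidP G i -> u i = beta G i j /\ (~~ rigidQ G j -> gamma G i j <= v j)) /\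
         (rigidQ G j -> v j = gamma G i j /\ (~~ rigidP G i -> beta G i j <= u i))),
      (forall i, mu i = None ->
         if rigidP G i then u i = resP G i else resP G i <= u i) /\
      (forall j, mateQ mu j = None ->
         if rigidQ G j then v j = resQ G j else resQ G j <= v j)
    & (* (3); dummies' own payoffs cancel with their own shares *)
      \sum_i u i + \sum_j v j =
      \sum_i (if mu i is Some j then alpha i j else resP G i)
      + \sum_j (if mateQ mu j is None then resQ G j else 0)].

Definition stable (u v : 'I_n -> R) (mu : 'I_n -> option 'I_n) : Prop :=
  [/\ feasible u v mu,
      (forall i j, flex_pair i j -> alpha i j <= u i + v j),
      (forall i j, ~~ flex_pair i j -> beta G i j <= u i \/ gamma G i j <= v j)
    & (* no agent is blocked by his dummy: he gets at least his reservation price *)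
      (forall i, resP G i <= u i) /\ (forall j, resQ G j <= v j)].

(* The total payoff to coalition C (of real agents) is forced under mu:
   every mu-pair with exactly one agent in C contains a rigid agent
   (pairs with a dummy always do). *)
Definition forced (mu : 'I_n -> option 'I_n) (C : {set 'I_n + 'I_n}) : Prop :=
  forall i j, mu i = Some j -> (inl i \in C) != (inr j \in C) ->
    rigidP G i || rigidQ G j.

Definition forced_payoff (mu : 'I_n -> option 'I_n) (C : {set 'I_n + 'I_n}) : R :=
  \sum_(i | inl i \in C) (if mu i is Some j then beta G i j else resP G i)
  + \sum_(j | inr j \in C) (if mateQ mu j is Some i then gamma G i j else resQ G j).

Definition coincide_on (mu mu' : 'I_n -> option 'I_n) (C : {set 'I_n + 'I_n}) : Prop :=
  (forall i, inl i \in C -> mu i = mu' i) /\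
  (forall j, inr j \in C -> mateQ mu j = mateQ mu' j).

Definition non_degenerate : Prop :=
  forall mu mu' : 'I_n -> option 'I_n, is_matching mu -> is_matching mu' ->
  forall C : {set 'I_n + 'I_n},
    C != set0 ->
    forced mu C -> forced mu' C ->
    (forall C' : {set 'I_n + 'I_n}, C' \proper C -> C' != set0 -> ~ (forced mu C' /\ forced mu' C')) ->
    forced_payoff mu C = forced_payoff mu' C ->
    coincide_on mu mu' C.

End RiFle.

(* Main.v *)
Require Import Defs.
From mathcomp Require Import all_boot all_order all_algebra.
From mathcomp Require Import lra.
Set Implicit Arguments. Unset Strict Implicit. Unset Printing Implicit Defensive.
Import Order.TTheory GRing.Theory Num.Theory.
Local Open Scope ring_scope.

Section PathArg.
Variables (R : realFieldType) (A : finType).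
Variables (m1 m2 : A -> option A) (flexA : A -> bool) (side : A -> bool) (z : A -> R) (a0 : A).
Definition mb (b : bool) := if b then m1 else m2.
Hypothesis msym : forall b x y, mb b x = Some y -> mb b y = Some x.
Hypothesis mside : forall b x y, mb b x = Some y -> side y = ~~ side x.
Hypothesis zdead1 : forall x, m1 x = None -> z x <= 0.
Hypothesis zdead2 : forall x, m2 x = None -> 0 <= z x.
Hypothesis znf1 : forall x y, m1 x = Some y -> ~~ (flexA x && flexA y) -> z x <= 0 \/ z y <= 0.
Hypothesis znf2 : forall x y, m2 x = Some y -> ~~ (flexA x && flexA y) -> 0 <= z x \/ 0 <= z y.
Hypothesis zff1 : forall x y, m1 x = Some y -> flexA x && flexA y -> z x + z y <= 0.
Hypothesis zff2 : forall x y, m2 x = Some y -> flexA x && flexA y -> 0 <= z x + z y.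
Definition closedb b (C : {set A}) := forall x y, mb b x = Some y -> flexA x -> flexA y ->
  x \in C -> y \in C.
Hypothesis Hnd : forall C : {set A}, C != set0 -> closedb true C -> closedb false C ->
  (forall C' : {set A}, C' \proper C -> C' != set0 -> ~ (closedb true C' /\ closedb false C')) ->
  (exists x, x \in C /\ m1 x != m2 x) -> \sum_(x in C) z x != 0.
Hypothesis a0dead : m1 a0 = None.
Hypothesis a0live : m2 a0 != None.

Definition step (s : nat) := mb (odd s).
Fixpoint walk (t : nat) : option A :=
  if t is t'.+1 then obind (step t') (walk t') else Some a0.
Definition ag t := odflt a0 (walk t).

Lemma walkS t y : walk t.+1 = Some y -> exists x, walk t = Some x /\ step t x = Some y.
Proof. by rewrite /=; case: (walk t) => [x|] //= H; exists x. Qed.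

Lemma walk_side t x : walk t = Some x -> side x = side a0 (+) odd t.
Proof.
elim: t x => [|t IH] x /=; first by case=> <-; rewrite addbF.
move=> /walkS [x' [H1 H2]]; rewrite (mside H2) (IH _ H1).
by case: (side a0); case: (odd t).
Qed.

Lemma walk_a0 t : walk t = Some a0 -> t = 0%N.
Proof.
case: t => [//|t] H.
have Hs := walk_side H; move: Hs => /=.
have [x [H1 H2]] := walkS H.
have := msym H2; rewrite /step.
by case: (odd t); case: (side a0) => //= H' _; rewrite a0dead in H'.
Qed.

Lemma walk_inj s t x : walk s = Some x -> walk t = Some x -> s = t.
Proof.
elim: s t x => [|s IH] t x.
  by move=> [<-] /walk_a0.
case: t => [|t].
  by move=> H [Hx]; subst x; have := walk_a0 H.
move=> Hs Ht.
have Hp : odd s = odd t.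
  have := walk_side Hs; rewrite (walk_side Ht) /=.
  by case: (side a0); case: (odd s); case: (odd t).
have [x1 [H1 H1']] := walkS Hs.
have [x2 [H2 H2']] := walkS Ht.
have E1 := msym H1'; have E2 := msym H2'.
move: E1 E2; rewrite /step Hp => -> [E]; subst x2.
by rewrite (IH t x1 H1 H2).
Qed.

Lemma walk_prefix t s : walk t != None -> (s <= t)%N -> walk s = Some (ag s).
Proof.
move=> Ht Hst.
suff : walk s != None by rewrite /ag; case: (walk s).
elim: t Ht Hst => [|t IH] Ht Hst.
  by move: Hst; rewrite leqn0 => /eqP ->.
move: Hst; rewrite leq_eqVlt => /orP [/eqP -> //|Hst].
apply: IH => //.
by move: Ht => /=; case: (walk t).
Qed.

Lemma nbr s x b y : walk s = Some x -> mb b x = Some y ->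
  (odd s = b /\ walk s.+1 = Some y) \/ (exists s', s = s'.+1 /\ odd s' = b /\ walk s' = Some y).
Proof.
move=> Hs Hb.
case: (boolP (odd s == b)) => [/eqP E|E].
  by left; split => //=; rewrite Hs /= /step E.
right; case: s Hs E => [|s] Hs E.
  move: Hs => [Hx]; subst x; move: E Hb; case: b => //= _.
  by rewrite a0dead.
have [x' [H1 H2]] := walkS Hs.
have Hb' : odd s = b by move: E => /=; case: (odd s); case: (b).
have := msym H2; rewrite /step Hb' Hb => -[->].
by exists s.
Qed.


Definition ffe s := flexA (ag s) && flexA (ag s.+1).

Lemma walk_step t : walk t.+1 != None -> step t (ag t) = Some (ag t.+1).
Proof.
move=> H.
have Ht := walk_prefix H (leqnSn t).
have Ht1 := walk_prefix H (leqnn t.+1).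
by move: Ht1; rewrite /= Ht.
Qed.

Lemma witness_ne t : walk t != None -> m1 (ag t) != m2 (ag t).
Proof.
move=> Hw; apply/negP => /eqP E.
have Eb : forall b, mb b (ag t) = m1 (ag t) by case; rewrite //= E.
case: t Hw E Eb => [|t] Hw E Eb.
  by move: a0live; rewrite -E /ag /= a0dead.
have Ht := walk_prefix Hw (leqnn _).
have [x' [H1 H2]] := walkS Ht.
have H3 := msym H2.
have H4 : walk t.+2 = Some x'.
  have -> : walk t.+2 = obind (step t.+1) (walk t.+1) by [].
  by rewrite Ht /= /step Eb -(Eb (odd t)).
have := walk_inj H4 H1; move/eqP.
by rewrite -[X in X == _]addn2 -{2}[t]addn0 eqn_add2l.
Qed.

Lemma run_sum_ne0 l t : (l <= t)%N -> walk t != None ->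
  (forall s, (l <= s < t)%N -> ffe s) ->
  (l = 0%N \/ exists l', l = l'.+1 /\ ~~ ffe l') ->
  (step t (ag t) = None \/ exists y, step t (ag t) = Some y /\ ~~ (flexA (ag t) && flexA y)) ->
  \sum_(l <= s < t.+1) z (ag s) != 0.
Proof.
move=> Hlt Hw Hff Hleft Hright.
have Hpre : forall s, (s <= t)%N -> walk s = Some (ag s) by move=> s; apply: walk_prefix.
set C := [set x | x \in [seq ag s | s <- index_iota l t.+1]].
have memC : forall x, (x \in C) = [exists s : 'I_t.+1, (l <= s)%N && (x == ag s)].
  move=> x; rewrite inE; apply/mapP/existsP.
    move=> [s]; rewrite mem_index_iota => /andP [H1 H2] ->.
    by exists (Ordinal H2); rewrite /= H1 eqxx.
  move=> [s /andP [H1 /eqP ->]]; exists (nat_of_ord s) => //.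
  by rewrite mem_index_iota H1 ltn_ord.
have inC : forall s, (l <= s <= t)%N -> ag s \in C.
  move=> s /andP [H1 H2]; rewrite memC; apply/existsP.
  by exists (Ordinal (H2 : (s < t.+1)%N)); rewrite /= H1 eqxx.
have ofC : forall x, x \in C -> exists s, [/\ (l <= s)%N, (s <= t)%N & x = ag s].
  move=> x; rewrite memC => /existsP [s /andP [H1 /eqP ->]].
  by exists s; split => //; rewrite -ltnS ltn_ord.
have Hsum : \sum_(x in C) z x = \sum_(l <= s < t.+1) z (ag s).
  rewrite -(big_map ag xpredT z) big_uniq.
    by apply: eq_bigl => x; rewrite inE.
  rewrite map_inj_in_uniq ?iota_uniq // => s1 s2.
  rewrite !mem_index_iota => /andP [_ H1] /andP [_ H2] E.
  apply: (@walk_inj s1 s2 (ag s1)); first exact: Hpre.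
  by rewrite E; apply: Hpre.
have closedC : forall b, closedb b C.
  move=> b x y Hb Fx Fy /ofC [s [H1 H2 Hx]]; subst x.
  case: (nbr (Hpre _ H2) Hb) => [[Hodd Hy]|[s' [Hs [Hodd Hy]]]].
    move: H2; rewrite leq_eqVlt => /orP [/eqP E|H2].
      subst s; exfalso; move: Hright; rewrite /step Hodd Hb.
      by case=> // -[y' [[<-]]]; rewrite Fx Fy.
    have := Hpre _ H2; rewrite Hy => -[->]; apply: inC.
    by rewrite H2 andbT ltnW.
  subst s; case: (leqP l s') => H3.
    have := Hpre s' (ltnW H2); rewrite Hy => -[->]; apply: inC.
    by rewrite H3 ltnW.
  have El : l = s'.+1 by apply/eqP; rewrite eqn_leq H1 H3.
  exfalso; case: Hleft => [|[l' [El' Hl']]]; first by rewrite El.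
  move: Hl'; rewrite El in El'; case: El' => <-; rewrite /ffe.
  have := Hpre s' (ltnW H2); rewrite Hy => -[<-].
  by rewrite Fx Fy.
rewrite -Hsum; apply: Hnd.
- by apply/set0Pn; exists (ag l); apply: inC; rewrite leqnn Hlt.
- exact: closedC.
- exact: closedC.
- move=> C' HC' HC'0 [Hc1 Hc2].
  have Hc : forall b, closedb b C' by case.
  have adj : forall s, (l <= s < t)%N -> (ag s \in C') = (ag s.+1 \in C').
    move=> s Hs; have Hf := Hff s Hs; move: Hf; rewrite /ffe => /andP [F1 F2].
    have Hst : step s (ag s) = Some (ag s.+1).
      apply: walk_step; rewrite (Hpre s.+1) //.
      by case/andP: Hs.
    apply/idP/idP => H.
      exact: (Hc _ _ _ Hst F1 F2 H).
    exact: (Hc _ _ _ (msym Hst) F2 F1 H).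
  have all_in : forall d, (l + d <= t)%N -> (ag (l + d) \in C') = (ag l \in C').
    elim=> [|d IH] Hd; first by rewrite addn0.
    have Hd' : (l <= l + d < t)%N by rewrite leq_addr -addnS.
    rewrite addnS -(adj _ Hd'); apply: IH.
    by apply: leq_trans Hd; rewrite leq_add2l.
  have [x Hx] := set0Pn _ HC'0.
  move: HC'; rewrite properE => /andP [Hsub /negP]; apply.
  have [s [H1 H2 Ex]] := ofC x (subsetP Hsub x Hx).
  have Hl : ag l \in C'.
    rewrite -(all_in (s - l)%N); first by rewrite subnKC // -Ex.
    by rewrite subnKC.
  apply/subsetP => y /ofC [s' [H1' H2' ->]].
  by rewrite -(subnKC H1') all_in ?subnKC.
- exists (ag t); split; first by apply: inC; rewrite Hlt leqnn.
  exact: witness_ne.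
Qed.


Definition Inv t := walk t != None /\ exists l, [/\ (l <= t)%N,
   (forall s, (l <= s < t)%N -> ffe s),
   (l = 0%N \/ exists l', l = l'.+1 /\ ~~ ffe l'),
   (if odd l then 0 <= z (ag l) else z (ag l) <= 0) &
   (\sum_(l <= s < t.+1) z (ag s) <= (if odd l then 0 else z (ag l)) + (if odd t then z (ag t) else 0) /\
   (if odd l then z (ag l) else 0) + (if odd t then 0 else z (ag t)) <= \sum_(l <= s < t.+1) z (ag s))].

Lemma sign_end l t (S : R) : S != 0 ->
  (if odd l then 0 <= z (ag l) else z (ag l) <= 0) ->
  S <= (if odd l then 0 else z (ag l)) + (if odd t then z (ag t) else 0) ->
  (if odd l then z (ag l) else 0) + (if odd t then 0 else z (ag t)) <= S ->
  (if odd t then 0 < z (ag t) else z (ag t) < 0).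
Proof.
rewrite neq_lt => /orP [] HS; case: (odd l); case: (odd t) => /= H1 H2 H3; lra.
Qed.

Lemma Inv0 : Inv 0.
Proof.
split => //; exists 0%N; split.
- by [].
- by move=> s /andP [H1 H2]; move: H2; rewrite ltnNge H1.
- by left.
- by rewrite /= /ag /= zdead1.
- by rewrite big_nat1 /=; split; lra.
Qed.

Lemma InvS t : Inv t -> Inv t.+1.
Proof.
move=> [Hw [l [Hlt Hff Hleft Hent [Hup Hlo]]]].
have Hwt := walk_prefix Hw (leqnn t).
have Hwt1 : walk t.+1 = step t (ag t) by rewrite /= Hwt.
case E: (step t (ag t)) => [y|].
  have Hw1 : walk t.+1 != None by rewrite Hwt1 E.
  have Ey : ag t.+1 = y by rewrite /ag Hwt1 E.
  case Hf: (flexA (ag t) && flexA y).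
    split => //; exists l; split.
    - exact: leqW.
    - move=> s /andP [H1 H2]; move: H2; rewrite ltnS leq_eqVlt => /orP [/eqP ->|H2].
        by rewrite /ffe Ey.
      by apply: Hff; rewrite H1.
    - exact: Hleft.
    - exact: Hent.
    rewrite big_nat_recr /=; last exact: leqW.
    move: E; rewrite /step Ey; case Ho: (odd t) => E.
      have := zff1 E Hf; move: Hup Hlo; rewrite Ho /=.
      case: (odd l) => H1 H2 H3; split; lra.
    have := zff2 E Hf; move: Hup Hlo; rewrite Ho /=.
    case: (odd l) => H1 H2 H3; split; lra.
  have Hne := run_sum_ne0 Hlt Hw Hff Hleft (or_intror (ex_intro _ y (conj E (negbT Hf)))).
  have Hsg := sign_end Hne Hent Hup Hlo.
  have Hy : if odd t then z y <= 0 else 0 <= z y.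
    move: E Hsg; rewrite /step; case: (odd t) => E Hsg.
      by case: (znf1 E (negbT Hf)) => // H; lra.
    by case: (znf2 E (negbT Hf)) => // H; lra.
  split => //; exists t.+1; split.
  - by [].
  - by move=> s /andP [H1 H2]; move: H2; rewrite ltnNge H1.
  - by right; exists t; rewrite /ffe Ey Hf.
  - by rewrite /= Ey; case: (odd t) Hy.
  - rewrite big_nat1 /= Ey; case: (odd t) => /=; split; lra.
exfalso.
have Hne := run_sum_ne0 Hlt Hw Hff Hleft (or_introl E).
have Hsg := sign_end Hne Hent Hup Hlo.
move: E Hsg; rewrite /step; case: (odd t) => E Hsg.
  by have := zdead1 E; lra.
by have := zdead2 E; lra.
Qed.

Theorem path_contra : False.
Proof.
have HI : forall t, Inv t by elim=> [|t IH]; [exact: Inv0 | exact: InvS].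
pose f (i : 'I_#|A|.+1) := ag i.
have finj : injective f.
  move=> i j E; apply: val_inj => /=.
  apply: (@walk_inj i j (ag i)); first exact: walk_prefix (proj1 (HI i)) (leqnn _).
  by rewrite /f in E; rewrite E; exact: walk_prefix (proj1 (HI j)) (leqnn _).
by have := leq_card f finj; rewrite card_ord ltnn.
Qed.

End PathArg.

Section Concrete.
Variables (R : realFieldType) (n : nat) (G : rifle_game R n).
Local Notation A := ('I_n + 'I_n)%type.

Definition pm (mu : 'I_n -> option 'I_n) (a : A) : option A :=
  match a with inl i => omap inr (mu i) | inr j => omap inl (mateQ mu j) end.
Definition flexA (a : A) : bool :=
  match a with inl i => ~~ rigidP G i | inr j => ~~ rigidQ G j end.
Definition sideA (a : A) : bool := if a is inl _ then true else false.
Definition share (mu : 'I_n -> option 'I_n) (a : A) : R :=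
  match a with
  | inl i => if mu i is Some j then beta G i j else resP G i
  | inr j => if mateQ mu j is Some i then gamma G i j else resQ G j end.
Definition pay (u v : 'I_n -> R) (a : A) : R :=
  match a with inl i => u i | inr j => v j end.

Lemma mateQP (mu : 'I_n -> option 'I_n) : is_matching mu -> forall i j, mateQ mu j = Some i <-> mu i = Some j.
Proof.
move=> Hm i j; rewrite /mateQ; case: pickP => [i' /eqP Hi'|H].
  split; first by case=> <-.
  by move=> Hi; rewrite (Hm _ _ _ Hi Hi').
split => // Hi; by have := H i; rewrite Hi eqxx.
Qed.

Lemma pm_sym (mu : 'I_n -> option 'I_n) : is_matching mu -> forall x y, pm mu x = Some y -> pm mu y = Some x.
Proof.
move=> Hm [i|j] y /=.
  case E: (mu i) => [j|] //= [<-] /=.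
  by have -> : mateQ mu j = Some i by apply/mateQP.
case E: (mateQ mu j) => [i|] //= [<-] /=.
by have -> : mu i = Some j by apply/mateQP.
Qed.

Lemma pm_side (mu : 'I_n -> option 'I_n) x y : pm mu x = Some y -> sideA y = ~~ sideA x.
Proof.
by case: x => [i|j] /=; [case: (mu i) => //= j [<-] | case: (mateQ mu j) => //= i [<-]].
Qed.

Lemma pm_cases (mu : 'I_n -> option 'I_n) : is_matching mu -> forall x y, pm mu x = Some y ->
  exists i j, mu i = Some j /\ ((x = inl i /\ y = inr j) \/ (x = inr j /\ y = inl i)).
Proof.
move=> Hm [i|j] y /=.
  case E: (mu i) => [j|] //= [<-]; exists i, j; split => //; by left.
case E: (mateQ mu j) => [i|] //= [<-]; exists i, j; split; last by right.
exact/(mateQP Hm).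
Qed.

Lemma share_pair (mu : 'I_n -> option 'I_n) i j : is_matching mu -> mu i = Some j ->
  share mu (inl i) = beta G i j /\ share mu (inr j) = gamma G i j.
Proof.
move=> Hm E; rewrite /= E; split => //.
by have -> : mateQ mu j = Some i by apply/mateQP.
Qed.

Lemma pairsum (mu : 'I_n -> option 'I_n) (F : 'I_n -> 'I_n -> R) : is_matching mu ->
  \sum_j (if mateQ mu j is Some i then F i j else 0) =
  \sum_i (if mu i is Some j then F i j else 0).
Proof.
move=> Hm.
transitivity (\sum_j \sum_i (if mu i == Some j then F i j else 0)).
  apply: eq_bigr => j _; case E: (mateQ mu j) => [i0|].
    have Ei0 : mu i0 = Some j by apply/(mateQP Hm).
    rewrite (bigD1 i0) //= Ei0 eqxx big1 ?addr0 // => i Hi.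
    case: eqP => // Hmu; by rewrite (Hm _ _ _ Hmu Ei0) eqxx in Hi.
  rewrite big1 // => i _; case: eqP => // Hmu.
  by have := (proj2 (mateQP Hm i j)) Hmu; rewrite E.
rewrite exchange_big; apply: eq_bigr => i _; case E: (mu i) => [j0|].
  rewrite (bigD1 j0) //= eqxx big1 ?addr0 // => j Hj.
  by case: eqP => // -[Hjj]; rewrite Hjj eqxx in Hj.
by rewrite big1.
Qed.

Lemma forced_payoffE (mu : 'I_n -> option 'I_n) (C : {set A}) : forced_payoff G mu C = \sum_(a in C) share mu a.
Proof. by rewrite big_sumType. Qed.

Definition sig (mu : 'I_n -> option 'I_n) (a : A) : A :=
  if pm mu a is Some b then (if flexA a && flexA b then b else a) else a.

Lemma sig_invol (mu : 'I_n -> option 'I_n) : is_matching mu -> forall a, sig mu (sig mu a) = a.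
Proof.
move=> Hm a; rewrite /sig.
case E: (pm mu a) => [b|]; last by rewrite E.
case Hf: (flexA a && flexA b); last by rewrite E Hf.
by rewrite (pm_sym Hm E) andbC Hf.
Qed.

Section Stab.
Variables (u v : 'I_n -> R) (mu : 'I_n -> option 'I_n).
Hypothesis Hst : stable G u v mu.

Definition xd a := pay u v a - share mu a.

Lemma Hm : is_matching mu.
Proof. by case: Hst => -[]. Qed.

Lemma x_ge a : 0 <= xd a + xd (sig mu a).
Proof.
case: Hst => -[_ _ H2 [Hd1 Hd2] _] Hff Hnf [Hp Hq].
rewrite /xd /sig; case: a => [i|j] /=.
  case E: (mu i) => [j|] /=; rewrite ?E /=; last by have := Hp i; lra.
  have [_ Sj] := share_pair Hm E.
  case Hf: (~~ rigidP G i && ~~ rigidQ G j).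
    by rewrite Sj /=; have := Hff i j Hf; rewrite /alpha; lra.
  have [Hr1 Hr2] := H2 i j E.
  rewrite /= E.
  case: (boolP (rigidP G i)) => Ri.
    by have [-> _] := Hr1 Ri; lra.
  have Rj : rigidQ G j by move: Hf; rewrite Ri /=; case: (rigidQ G j).
  by have [_ H] := Hr2 Rj; have := H Ri; lra.
case E: (mateQ mu j) => [i|] /=; rewrite ?E /=; last by have := Hq j; lra.
have Emu : mu i = Some j by apply/(mateQP Hm).
rewrite ?Emu.
case Hf: (~~ rigidQ G j && ~~ rigidP G i).
  have Hfp : flex_pair G i j by rewrite /flex_pair andbC.
  by rewrite /= Emu; have := Hff i j Hfp; rewrite /alpha; lra.
have [Hr1 Hr2] := H2 i j Emu.
rewrite /= ?E.
case: (boolP (rigidQ G j)) => Rj.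
  by have [-> _] := Hr2 Rj; lra.
have Ri : rigidP G i by move: Hf; rewrite Rj /=; case: (rigidP G i).
by have [_ H] := Hr1 Ri; have := H Rj; lra.
Qed.

Lemma sum_xd : \sum_a xd a = 0.
Proof.
case: Hst => -[_ _ _ _ H3] _ _ _.
rewrite /xd sumrB !big_sumType /=.
rewrite H3; apply/eqP; rewrite subr_eq0; apply/eqP.
have -> : \sum_i (if mu i is Some j then alpha G i j else resP G i) =
   \sum_i (if mu i is Some j then beta G i j else resP G i) +
   \sum_i (if mu i is Some j then gamma G i j else 0).
  rewrite -big_split /=.
  by apply: eq_bigr => i _; case: (mu i) => [j|]; rewrite /alpha ?addr0.
rewrite -addrA; congr (_ + _).
rewrite -(pairsum (gamma G) Hm) -big_split /=.
by apply: eq_bigr => j _; case: (mateQ mu j) => [i|]; rewrite ?addr0 ?add0r.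
Qed.

Lemma x_anti a : xd (sig mu a) = - xd a.
Proof.
have H0 : \sum_a (xd a + xd (sig mu a)) = 0.
  have E : \sum_a xd (sig mu a) = \sum_a xd a.
    by rewrite [RHS](reindex_inj (can_inj (sig_invol Hm))).
  by rewrite big_split /= E sum_xd addr0.
have H1 := @psumr_eq0P _ _ xpredT (fun a => xd a + xd (sig mu a)) (fun a _ => x_ge a) H0 a isT.
move: H1 => /= H1; lra.
Qed.

Lemma pay_fix a : sig mu a = a -> pay u v a = share mu a.
Proof. by move=> E; have := x_anti a; rewrite E /xd => H; lra. Qed.

Lemma pay_pair a : pay u v a + pay u v (sig mu a) = share mu a + share mu (sig mu a).
Proof. by have := x_anti a; rewrite /xd => H; lra. Qed.

Lemma sum_closed (C : {set A}) : (forall a, a \in C -> sig mu a \in C) ->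
  \sum_(a in C) pay u v a = \sum_(a in C) share mu a.
Proof.
move=> HC; apply/eqP; rewrite -subr_eq0 -sumrB; apply/eqP.
set S := \sum_(a in C) _.
have : S = - S.
  rewrite {1}/S (reindex_inj (can_inj (sig_invol Hm))) /= -sumrN.
  apply: eq_big => a.
    apply/idP/idP => H; last exact: HC.
    by rewrite -(sig_invol Hm a); apply: HC.
  by move=> _; have := x_anti a; rewrite /xd.
by move=> H; lra.
Qed.

Variables (u' v' : 'I_n -> R) (mu' : 'I_n -> option 'I_n).
Hypothesis Hst' : stable G u' v' mu'.

Lemma zc_dead x : pm mu x = None -> pay u v x <= pay u' v' x.
Proof.
move=> E; have Ef : sig mu x = x by rewrite /sig E.
rewrite (pay_fix Ef); case: Hst' => _ _ _ [Hp Hq].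
by case: x E {Ef} => [i|j] /=; [case: (mu i) => // _; exact: Hp | case: (mateQ mu j) => // _; exact: Hq].
Qed.

Lemma zc_nf x y : pm mu x = Some y -> ~~ (flexA x && flexA y) ->
  pay u v x <= pay u' v' x \/ pay u v y <= pay u' v' y.
Proof.
move=> E Hf.
have Ex : sig mu x = x by rewrite /sig E (negbTE Hf).
have Ey : sig mu y = y by rewrite /sig (pm_sym Hm E) andbC (negbTE Hf).
rewrite (pay_fix Ex) (pay_fix Ey).
case: Hst' => _ _ Hnf _.
have [i [j [Emu Hxy]]] := pm_cases Hm E.
have [S1 S2] := share_pair Hm Emu.
have Hfp : ~~ flex_pair G i j.
  by case: Hxy Hf => -[-> ->] //=; rewrite /flex_pair andbC.
case: Hxy => -[-> ->]; rewrite S1 S2 /=; case: (Hnf i j Hfp); auto.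
Qed.

Lemma zc_ff x y : pm mu x = Some y -> flexA x && flexA y ->
  pay u v x + pay u v y <= pay u' v' x + pay u' v' y.
Proof.
move=> E Hf.
have Ex : sig mu x = y by rewrite /sig E Hf.
have := pay_pair x; rewrite Ex => ->.
case: Hst' => _ Hff _ _.
have [i [j [Emu Hxy]]] := pm_cases Hm E.
have [S1 S2] := share_pair Hm Emu.
have Hfp : flex_pair G i j.
  by case: Hxy Hf => -[-> ->] //=; rewrite /flex_pair andbC.
have := Hff i j Hfp; rewrite /alpha.
by case: Hxy => -[-> ->]; rewrite S1 S2 /=; lra.
Qed.

End Stab.

Lemma closed_forced (mu : 'I_n -> option 'I_n) (C : {set A}) : is_matching mu ->
  (forall x y, pm mu x = Some y -> flexA x -> flexA y -> x \in C -> y \in C) -> forced G mu C.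
Proof.
move=> Hm Hc i j E Hne; apply/negPn/negP; rewrite negb_or => /andP [Fi Fj].
have E1 : pm mu (inl i) = Some (inr j) by rewrite /= E.
have E2 := pm_sym Hm E1.
move/negP: Hne; apply; apply/eqP; apply/idP/idP => H.
  exact: (Hc _ _ E1 Fi Fj H).
exact: (Hc _ _ E2 Fj Fi H).
Qed.

Lemma forced_closed (mu : 'I_n -> option 'I_n) (C : {set A}) : is_matching mu -> forced G mu C ->
  (forall x y, pm mu x = Some y -> flexA x -> flexA y -> x \in C -> y \in C).
Proof.
move=> Hm Hf x y E Fx Fy Hx.
have [i [j [Emu Hxy]]] := pm_cases Hm E.
have Heq : (inl i \in C) = (inr j \in C).
  apply/eqP; apply/negPn/negP => Hne.
  have := Hf i j Emu Hne.
  by case: Hxy Fx Fy => -[-> ->] /= F1 F2; rewrite ?(negbTE F1) ?(negbTE F2) /= ?orbF.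
by case: Hxy Hx => -[-> ->]; rewrite Heq.
Qed.


End Concrete.

Theorem proposition5 (R : realFieldType) (n : nat) (G : rifle_game R n) :
  (forall i j, 0 <= beta G i j) -> (forall i j, 0 <= gamma G i j) ->
  (forall i, 0 <= resP G i) -> (forall j, 0 <= resQ G j) ->
  non_degenerate G ->
  forall (u v u' v' : 'I_n -> R) (mu mu' : 'I_n -> option 'I_n),
    stable G u v mu -> stable G u' v' mu' ->
    unmatched mu = unmatched mu'.
Proof.
move=> _ _ _ _ Hnd.
have key : forall (u v u' v' : 'I_n -> R) (mu mu' : 'I_n -> option 'I_n),
    stable G u v mu -> stable G u' v' mu' -> forall x, pm mu x = None -> pm mu' x = None.
  move=> u v u' v' mu mu' S1 S2 x Hx.
  case E: (pm mu' x) => [y|] //; exfalso.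
  have Hm1 := Hm S1; have Hm2 := Hm S2.
  apply: (@path_contra R _ (pm mu) (pm mu') (flexA G) (@sideA n)
            (fun a => pay u v a - pay u' v' a) x).
  - by case=> a b; rewrite /mb; [apply: (pm_sym Hm1 (x:=a)) | apply: (pm_sym Hm2 (x:=a))].
  - by case=> a b; rewrite /mb; apply: pm_side.
  - by move=> a Ha; have := zc_dead S1 S2 Ha; lra.
  - by move=> a Ha; have := zc_dead S2 S1 Ha; lra.
  - by move=> a b Hab Hf; case: (zc_nf S1 S2 Hab Hf) => H; [left|right]; lra.
  - by move=> a b Hab Hf; case: (zc_nf S2 S1 Hab Hf) => H; [left|right]; lra.
  - by move=> a b Hab Hf; have := zc_ff S1 S2 Hab Hf; lra.
  - by move=> a b Hab Hf; have := zc_ff S2 S1 Hab Hf; lra.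
  - move=> C HC0 Hc1 Hc2 Hmin [w [Hw Hne]]; apply/negP => /eqP HS.
    have Hsig1 : forall a, a \in C -> sig G mu a \in C.
      move=> a Ha; rewrite /sig; case E1: (pm mu a) => [b|] //.
      by case: ifP => // /andP [Fa Fb]; exact: (Hc1 _ _ E1 Fa Fb Ha).
    have Hsig2 : forall a, a \in C -> sig G mu' a \in C.
      move=> a Ha; rewrite /sig; case E1: (pm mu' a) => [b|] //.
      by case: ifP => // /andP [Fa Fb]; exact: (Hc2 _ _ E1 Fa Fb Ha).
    have Heq : forced_payoff G mu C = forced_payoff G mu' C.
      rewrite !forced_payoffE -(sum_closed S1 Hsig1) -(sum_closed S2 Hsig2).
      by apply/eqP; rewrite -subr_eq0 -sumrB HS.
    have [Hi Hj] := Hnd mu mu' Hm1 Hm2 C HC0 (closed_forced Hm1 Hc1) (closed_forced Hm2 Hc2)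
      (fun C' Hp Hne' HF => Hmin C' Hp Hne' (conj (forced_closed Hm1 (proj1 HF)) (forced_closed Hm2 (proj2 HF)))) Heq.
    move: Hne; case: w Hw => [i|j] Hw /=; [rewrite (Hi i Hw) | rewrite (Hj j Hw)]; by rewrite eqxx.
  - exact: Hx.
  - by rewrite E.
move=> u v u' v' mu mu' S1 S2.
apply/setP => a; rewrite !inE; case: a => [i|j].
  have K1 := key _ _ _ _ _ _ S1 S2 (inl i); have K2 := key _ _ _ _ _ _ S2 S1 (inl i).
  move: K1 K2 => /=; case: (mu i) => [a|]; case: (mu' i) => [b|] //= K1 K2.
    by have := K2 erefl.
  by have := K1 erefl.
have K1 := key _ _ _ _ _ _ S1 S2 (inr j); have K2 := key _ _ _ _ _ _ S2 S1 (inr j).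
move: K1 K2 => /=; case: (mateQ mu j) => [a|]; case: (mateQ mu' j) => [b|] //= K1 K2.
  by have := K2 erefl.
by have := K1 erefl.
Qed.
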